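(* Let $\Phi$ be a (crystallographic) root system with affine Weyl group $\widetilde W$, let $\Lambda=\langle\Phi^\vee\rangle$ be the coroot lattice, and let $T=\mathfrak h/\Lambda$, where $\mathfrak h$ is a Cartan subalgebra of the semisimple complex Lie algebra associated to $\Phi$. For each positive root $\alpha\in\Phi^+$ let $e^\alpha:T\to\mathbb C/\mathbb Z\cong\mathbb C^*$ be the character induced by $\alpha$. Then the toric arrangement $\mathcal T_{\widetilde W}=\{H_{e^\alpha}\mid \alpha\in\Phi^+\}$, $H_{e^\alpha}=\{t\in T\mid e^\alpha(t)=1\}$, is thick.
   Context: The universal covering is $\pi:\mathfrak h\to\mathfrak h/\Lambda=T$; its real part $\pi:V_{\mathbb R}\to T_{\mathbb R}$ and the associated periodic real affine arrangement $\mathcal A_{X,\mathbb R}$ (all real hyperplanes whose complexification maps onto some $H_{e^\alpha}$; here it is the arrangement of reflection hyperplanes of $\widetilde W$) are defined as usual. A chamber of $\mathcal A_{X,\mathbb R}$ is a connected component of the complement of its hyperplanes in $V_{\mathbb R}$. Definition: a toric arrangement is thick if $\pi$ is injective on the closure of every chamber of the associated real affine arrangement $\mathcal A_{X,\mathbb R}$. *)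

(* Defs.v *)
From HB Require Import structures.
From mathcomp Require Import all_boot all_order all_algebra.
From mathcomp Require Import all_classical all_reals all_analysis.
Set Implicit Arguments. Unset Strict Implicit. Unset Printing Implicit Defensive.
Import Order.TTheory GRing.Theory Num.Theory.
Import numFieldNormedType.Exports.
Local Open Scope classical_set_scope.
Local Open Scope ring_scope.

Definition dotv (R : realType) (n : nat) (u v : 'rV[R]_n) : R := (u *m v^T) 0 0.

Definition cartan (R : realType) (n : nat) (b a : 'rV[R]_n) : R :=
  2 * dotv b a / dotv a a.

Definition coroot (R : realType) (n : nat) (a : 'rV[R]_n) : 'rV[R]_n :=
  (2 / dotv a a) *: a.

(* Phi (a finite list of vectors) is a reduced crystallographic root system
   spanning V_R = R^n (semisimple case: T = h / Lambda is a compact torus). *)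
Definition is_root_system (R : realType) (n : nat) (Phi : seq 'rV[R]_n) : Prop :=
  [/\ (0 \notin Phi),
      (forall v : 'rV[R]_n, exists c : 'rV[R]_n -> R, v = \sum_(a <- Phi) c a *: a),
      (forall a b, a \in Phi -> b \in Phi -> b - cartan b a *: a \in Phi),
      (forall a b, a \in Phi -> b \in Phi -> exists k : int, cartan b a = k%:~R) &
      (forall a (c : R), a \in Phi -> c *: a \in Phi -> c = 1 \/ c = -1)].

Definition in_coroot_lattice (R : realType) (n : nat) (Phi : seq 'rV[R]_n)
    (v : 'rV[R]_n) : Prop :=
  exists c : 'rV[R]_n -> int, v = \sum_(a <- Phi) (c a)%:~R *: coroot a.

(* The associated periodic real affine arrangement A_{X,R}: all real hyperplanes
   {x | (a, x) = k}, a in Phi, k in Z (those mapping onto some H_{e^a}). *)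
Definition arr_complement (R : realType) (n : nat) (Phi : seq 'rV[R]_n) : set 'rV[R]_n :=
  [set x | forall a, a \in Phi -> forall k : int, dotv a x != k%:~R].

Definition is_chamber (R : realType) (n : nat) (Phi : seq 'rV[R]_n)
    (C : set 'rV[R]_n) : Prop :=
  exists2 x, arr_complement Phi x & C = connected_component (arr_complement Phi) x.

(* pi : V_R -> T_R = V_R / Lambda; pi x = pi y iff x - y in Lambda.
   Thick: pi injective on the closure of every chamber. *)
Definition thick (R : realType) (n : nat) (Phi : seq 'rV[R]_n) : Prop :=
  forall C : set 'rV[R]_n, is_chamber Phi C ->
  forall x y, closure C x -> closure C y -> in_coroot_lattice Phi (x - y) -> x = y.

(* Main.v *)
Require Import Defs.
From HB Require Import structures.
From mathcomp Require Import all_boot all_order all_algebra.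
From mathcomp Require Import all_classical all_reals all_analysis.
From mathcomp Require Import ring lra zify.
Set Implicit Arguments. Unset Strict Implicit. Unset Printing Implicit Defensive.
Import Order.TTheory GRing.Theory Num.Theory.
Import numFieldNormedType.Exports.
Local Open Scope classical_set_scope.
Local Open Scope ring_scope.

Section S.
Variables (R : realType) (n : nat).
Implicit Types (u v w a b : 'rV[R]_n).

Lemma dotvE u v : dotv u v = \sum_i u 0 i * v 0 i.
Proof. by rewrite /dotv mxE; apply: eq_bigr => i _; rewrite mxE. Qed.

Lemma dotvC u v : dotv u v = dotv v u.
Proof. by rewrite !dotvE; apply: eq_bigr => i _; rewrite mulrC. Qed.

Lemma dotvDr u v w : dotv u (v + w) = dotv u v + dotv u w.
Proof. by rewrite !dotvE -big_split; apply: eq_bigr => i _; rewrite mxE mulrDr. Qed.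

Lemma dotvZr u k v : dotv u (k *: v) = k * dotv u v.
Proof. by rewrite !dotvE mulr_sumr; apply: eq_bigr => i _; rewrite mxE mulrCA. Qed.

Lemma dotvNr u v : dotv u (- v) = - dotv u v.
Proof. by rewrite -scaleN1r dotvZr mulN1r. Qed.

Lemma dotvBr u v w : dotv u (v - w) = dotv u v - dotv u w.
Proof. by rewrite dotvDr dotvNr. Qed.

Lemma dotv0r u : dotv u 0 = 0.
Proof. by rewrite -(scale0r 0) dotvZr mul0r. Qed.

Lemma dotvDl u v w : dotv (v + w) u = dotv v u + dotv w u.
Proof. by rewrite dotvC dotvDr !(dotvC u). Qed.
Lemma dotvZl u k v : dotv (k *: v) u = k * dotv v u.
Proof. by rewrite dotvC dotvZr dotvC. Qed.
Lemma dotvNl u v : dotv (- v) u = - dotv v u.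
Proof. by rewrite dotvC dotvNr dotvC. Qed.
Lemma dotvBl u v w : dotv (v - w) u = dotv v u - dotv w u.
Proof. by rewrite dotvC dotvBr !(dotvC u). Qed.

Lemma dotv_sumr (I : Type) (s : seq I) (F : I -> 'rV[R]_n) u :
  dotv u (\sum_(i <- s) F i) = \sum_(i <- s) dotv u (F i).
Proof.
elim: s => [|i s IH]; first by rewrite !big_nil dotv0r.
by rewrite !big_cons dotvDr IH.
Qed.

Lemma dotv_ge0 u : 0 <= dotv u u.
Proof. rewrite dotvE; apply: sumr_ge0 => i _; rewrite -expr2; exact: sqr_ge0. Qed.

Lemma dotv_eq0 u : dotv u u = 0 -> u = 0.
Proof.
rewrite dotvE => h; apply/rowP => i; rewrite mxE.
have := @psumr_eq0P _ _ xpredT (fun i => u 0 i * u 0 i) (fun i _ => eq_ind _ (fun t => 0 <= t) (sqr_ge0 (u 0 i)) _ (expr2 _)) h i isT.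
by move/eqP; rewrite mulf_eq0 orbb => /eqP.
Qed.

Lemma coroot_refl a b : dotv a a != 0 -> dotv b b != 0 ->
  coroot (b - cartan b a *: a) = coroot b - cartan a b *: coroot a.
Proof.
move=> hA hB.
have hc : dotv (b - cartan b a *: a) (b - cartan b a *: a) = dotv b b.
  rewrite !(dotvBl, dotvBr, dotvZl, dotvZr) (dotvC a b) /cartan.
  by field.
rewrite /coroot hc /cartan scalerBr !scalerA (dotvC a b).
congr (_ *: _ - _ *: _); field; by apply/andP.
Qed.

Lemma sum_cont (I : Type) (s : seq I) (g : I -> 'rV[R]_n -> R) :
  (forall i, continuous (g i)) -> continuous (fun z => \sum_(i <- s) g i z).
Proof.
move=> hg; elim: s => [|i s IH].
  under eq_fun do rewrite big_nil; exact: cst_continuous.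
under eq_fun do rewrite big_cons.
move=> x; apply: continuousD; [exact: hg|exact: IH].
Qed.

Lemma dot_cont a : continuous (fun z => dotv a z).
Proof.
under eq_fun do rewrite dotvE.
apply: sum_cont => i x; apply: continuousM.
  exact: cst_continuous.
exact: coord_continuous.
Qed.

Lemma slab (Phi : seq 'rV[R]_n) C a : is_chamber Phi C -> a \in Phi ->
  exists k : int, forall z, closure C z -> k%:~R <= dotv a z <= k%:~R + 1.
Proof.
move=> [x0 Ax0 ->] aP.
set f := fun z => dotv a z.
set k := Num.floor (f x0).
have hk1 : k%:~R <= f x0 by exact: floor_le.
have hk2 : f x0 < k%:~R + 1 by have := floorD1_gt (f x0); rewrite intrD.
have hne : forall z, connected_component (arr_complement Phi) x0 z ->
    forall m : int, f z != m%:~R.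
  by move=> z /connected_component_sub hz m; exact: hz.
have hk1' : k%:~R < f x0 by rewrite lt_neqAle hk1 eq_sym hne //; exact: connected_component_refl.
have hI : is_interval (f @` connected_component (arr_complement Phi) x0).
  apply/connected_intervalP/connected_continuous_connected.
    exact: component_connected.
  by apply: continuous_subspaceT => x; exact: dot_cont.
have sub : connected_component (arr_complement Phi) x0 `<=` [set z | k%:~R <= f z <= k%:~R + 1].
  move=> z Cz /=.
  have Cx0 : connected_component (arr_complement Phi) x0 x0 by exact: connected_component_refl.
  apply/andP; split.
    rewrite leNgt; apply/negP => lt.
    have [w Cw fw] : (f @` connected_component (arr_complement Phi) x0) k%:~R.
      apply: (hI (f z) (f x0)); [by exists z|by exists x0|].
      by rewrite (ltW lt) (ltW hk1').
    by move: (hne w Cw k); rewrite fw eqxx.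
  rewrite leNgt; apply/negP => lt.
  have [w Cw fw] : (f @` connected_component (arr_complement Phi) x0) (k + 1)%:~R.
    apply: (hI (f x0) (f z)); [by exists x0|by exists z|].
    by rewrite intrD (ltW lt) (ltW hk2).
  by move: (hne w Cw (k + 1)); rewrite fw eqxx.
exists k => z /(closureS sub).
have cl : closed [set z | k%:~R <= f z <= k%:~R + 1].
  have -> : [set z | k%:~R <= f z <= k%:~R + 1] =
    f @^-1` [set r | k%:~R <= r] `&` f @^-1` [set r | r <= k%:~R + 1].
    by apply/seteqP; split => r /= /andP.
  apply: closedI; apply: (proj1 (continuous_closedP f)); (try exact: dot_cont);
   [exact: closed_ge | exact: closed_le].
by rewrite -(proj1 (closure_id _) cl).
Qed.

Variable Phi : seq 'rV[R]_n.
Hypothesis RS : is_root_system Phi.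

Lemma root_nz a : a \in Phi -> dotv a a != 0.
Proof.
case: RS => h0 _ _ _ _ aP; apply/negP => /eqP /dotv_eq0 a0.
by move: h0; rewrite -a0 aP.
Qed.

Lemma root_gt0 a : a \in Phi -> 0 < dotv a a.
Proof. by move=> aP; rewrite lt_neqAle eq_sym root_nz // dotv_ge0. Qed.

Lemma cartan_aa a : a \in Phi -> cartan a a = 2.
Proof. move=> aP; have := root_nz aP; rewrite /cartan => h; by field. Qed.

Lemma root_opp a : a \in Phi -> - a \in Phi.
Proof.
move=> aP; case: RS => _ _ hr _ _; have := hr a a aP aP.
by rewrite cartan_aa // scaler_nat mulr2n opprD addrA subrr add0r.
Qed.

Lemma coroot_opp a : coroot (- a) = - coroot a.
Proof. by rewrite /coroot dotvNl dotvNr opprK scalerN. Qed.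

Lemma dotv_coroot b a : dotv b (coroot a) = cartan b a.
Proof. by rewrite /coroot dotvZr /cartan mulrAC. Qed.

Lemma cs_strict a b : a \in Phi -> b \in Phi -> dotv a b < 0 -> b != - a ->
  dotv a b ^+ 2 < dotv a a * dotv b b.
Proof.
move=> aP bP Dlt nab.
set A := dotv a a; set B := dotv b b; set D := dotv a b.
have Bgt : 0 < B := root_gt0 bP.
set w := B *: a - D *: b.
have hw : dotv w w = B * (A * B - D ^+ 2).
  rewrite /w !(dotvBl, dotvBr, dotvZl, dotvZr) (dotvC b a) -/A -/B -/D; ring.
have : 0 <= A * B - D ^+ 2.
  by have := dotv_ge0 w; rewrite hw pmulr_rge0.
rewrite le_eqVlt => /orP [/eqP e|]; last by rewrite subr_gt0.
have : w = 0 by apply: dotv_eq0; rewrite hw -e mulr0.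
move/eqP; rewrite subr_eq0 => /eqP e2.
have ea : a = (D / B) *: b.
  by rewrite mulrC -scalerA -e2 scalerA mulVf ?scale1r // gt_eqF.
case: RS => _ _ _ _ hred.
have := hred b (D / B) bP; rewrite -ea => /(_ aP) [] h.
  have DB : D = B by rewrite -[D](divfK (lt0r_neq0 Bgt)) h mul1r.
  by rewrite -/D DB in Dlt; lra.
by move: nab; rewrite ea h scaleN1r opprK eqxx.
Qed.

Lemma key a b : a \in Phi -> b \in Phi -> dotv a b < 0 -> b != - a ->
  exists2 c, c \in Phi & coroot a + coroot b = coroot c.
Proof.
move=> aP bP Dlt nab.
have Agt := root_gt0 aP; have Bgt := root_gt0 bP.
have cs := cs_strict aP bP Dlt nab.
case: RS => _ _ hr hint _.
have [p hp] := hint b a bP aP.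
have [q hq] := hint a b aP bP.
have pneg : p < 0.
  rewrite -(ltr_int R) -hp /cartan.
  by rewrite pmulr_llt0 ?invr_gt0 // pmulr_rlt0.
have qneg : q < 0.
  rewrite -(ltr_int R) -hq /cartan (dotvC b a).
  by rewrite pmulr_llt0 ?invr_gt0 // pmulr_rlt0.
have pq : p * q < 4.
  rewrite -(ltr_int R) intrM -hp -hq /cartan (dotvC b a).
  have -> : 2 * dotv a b / dotv b b * (2 * dotv a b / dotv a a) =
     4 * (dotv a b ^+ 2 / (dotv a a * dotv b b)).
    by field; apply/andP; split; apply: lt0r_neq0.
  rewrite (_ : (4%:~R : R) = 4 * 1); last by rewrite mulr1.
  rewrite ltr_pM2l // ltr_pdivrMr ?mul1r //; exact: mulr_gt0.
have [p1|q1] : p = -1 \/ q = -1 by lia.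
  exists (b - cartan b a *: a); first exact: hr.
  by rewrite coroot_refl ?root_nz // hp p1 scaleN1r opprK addrC.
exists (a - cartan a b *: b); first exact: hr.
by rewrite coroot_refl ?root_nz // hq q1 scaleN1r opprK.
Qed.

Lemma bounded_zero m : forall bs : seq 'rV[R]_n, (size bs <= m)%N -> all (mem Phi) bs ->
  (forall a, a \in Phi -> `|dotv a (\sum_(b <- bs) coroot b)| <= 1) ->
  \sum_(b <- bs) coroot b = 0.
Proof.
elim: m => [|m IH] bs.
  by rewrite leqn0 => /nilP -> _ _; rewrite big_nil.
move=> hs hall hb.
case: (pselect (exists b1 b2 rest, perm_eq bs [:: b1, b2 & rest] /\ dotv b1 b2 < 0)).
  move=> [b1 [b2 [rest [hp hlt]]]].
  have es : \sum_(b <- bs) coroot b = coroot b1 + coroot b2 + \sum_(b <- rest) coroot b.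
    by rewrite (perm_big _ hp) !big_cons /= addrA.
  have := hall; rewrite (perm_all _ hp) /= => /and3P [b1P b2P hrest].
  have hsz : (size rest <= m)%N by move: hs; rewrite (perm_size hp) /= ltnS => /ltnW.
  case: (eqVneq b2 (- b1)) => [e|ne].
    have e' : coroot b1 + coroot b2 = 0 by rewrite e coroot_opp subrr.
    rewrite es e' add0r; apply: IH => // a aP.
    by have := hb a aP; rewrite es e' add0r.
  have [c cP ec] := key b1P b2P hlt ne.
  have es2 : \sum_(b <- bs) coroot b = \sum_(b <- c :: rest) coroot b.
    by rewrite es ec big_cons.
  rewrite es2; apply: IH.
  - by move: hs; rewrite (perm_size hp) /= ltnS.
  - by rewrite /= cP.
  by move=> a aP; rewrite -es2; exact: hb.
move=> hno.
case: bs hs hall hb hno => [|b1 rest] hs hall hb hno; first by rewrite big_nil.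
exfalso.
have := hall; rewrite /= => /andP [b1P hrest].
have hge : forall b, b \in rest -> 0 <= dotv b1 b.
  move=> b bin; rewrite leNgt; apply/negP => hlt; apply: hno.
  exists b1, b, (rem b rest); split => //.
  by rewrite perm_cons perm_to_rem.
have := hb b1 b1P.
rewrite big_cons dotvDr dotv_coroot cartan_aa // dotv_sumr.
have hs0 : 0 <= \sum_(b <- rest) dotv b1 (coroot b).
  rewrite big_seq; apply: sumr_ge0 => b bin.
  rewrite dotv_coroot /cartan; apply: divr_ge0; first by rewrite mulr_ge0 // hge.
  exact: dotv_ge0.
move=> h; have := ler_norm (2 + \sum_(b <- rest) dotv b1 (coroot b)).
lra.
Qed.

Lemma sum_nseq a m : \sum_(b <- nseq m a) coroot b = coroot a *+ m.
Proof. elim: m => [|m IH]; first by rewrite big_nil. by rewrite /= big_cons IH mulrS. Qed.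

Lemma lattice_list (s : seq 'rV[R]_n) (c : 'rV[R]_n -> int) : all (mem Phi) s ->
  exists bs, all (mem Phi) bs /\
    \sum_(a <- s) (c a)%:~R *: coroot a = \sum_(b <- bs) coroot b.
Proof.
elim: s => [|a s IH] /=; first by move=> _; exists [::]; rewrite !big_nil.
move=> /andP [aP /IH [bs [hbs e]]].
case hk: (c a) => [m|m].
  exists (nseq m a ++ bs); split.
    by rewrite all_cat hbs andbT; apply/allP => z /nseqP [-> _].
  rewrite big_cons big_cat /= e; congr (_ + _).
  by rewrite (sum_nseq a m) hk scaler_nat.
exists (nseq m.+1 (- a) ++ bs); split.
  by rewrite all_cat hbs andbT; apply/allP => z /nseqP [-> _]; exact: root_opp.
rewrite big_cons big_cat /= e; congr (_ + _).
by rewrite (sum_nseq (- a) m.+1) hk NegzE intrN scaleNr scaler_nat coroot_opp mulNrn.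
Qed.

End S.

Theorem mainTheorem4 (R : realType) (n : nat) (Phi : seq 'rV[R]_n) :
  is_root_system Phi -> thick Phi.
Proof.
move=> RS C Cch x y cx cy [c hc].
have hall : all (mem Phi) Phi by apply/allP.
have [bs [hbs e]] := lattice_list RS c hall.
have h0 : \sum_(b <- bs) coroot b = 0.
  apply: (bounded_zero RS (m := size bs)) => // a aP.
  rewrite -e -hc dotvBr.
  have [k hk] := slab Cch aP.
  move: (hk x cx) (hk y cy) => /andP [h1 h2] /andP [h3 h4].
  rewrite ler_norml; apply/andP; split; lra.
by apply/subr0_eq; rewrite hc e.
Qed.
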